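(* Let $W\subset\mathbb{P}^n_{\mathbb{F}_p}$ be a subvariety over $\mathbb{F}_p$, and let $\widetilde{W}=\mathbb{P}^n|_W$. Then the endomorphism $Fr$ of the $p$-adic superspace $\mathbb{P}^n$ given by a choice of homogeneous coordinates, $(r_0:\dots:r_n)\mapsto(r_0^p:\dots:r_n^p)$ (a lifting of the Frobenius of $\mathbb{P}^n_{\mathbb{F}_p}$), restricts to an endomorphism of $\widetilde{W}$.
   Context: Throughout, $p$ is an odd prime, $\mathbb{F}_p=\mathbb{Z}_p/p$. Let $\Lambda$ be the category of supercommutative rings $\Lambda_B=B[\xi_1,\dots,\xi_m]$ ($m\ge0$, odd anticommuting generators) over finitely generated commutative rings $B$ with $p$ nilpotent and $B/pB$ reduced, with parity-preserving homomorphisms; $\Lambda_B^+$ is the ideal generated by the $\xi_i$. The $p$-adic superspace $\mathbb{P}^n:\Lambda\to Sets$ is $\mathbb{P}^n(\Lambda_B)=\{(r_0,\dots,r_n)\in(\Lambda_B^0)^{n+1}:\sum\Lambda_Br_i=\Lambda_B\}/(\Lambda_B^0)^\times$, with body $\mathbb{P}^n_{\mathbb{F}_p}$. For a subvariety $Z$ of the body, $\mathbb{P}^n|_Z(\Lambda_B)$ is the preimage of $Z(B/pB)$ under $\mathbb{P}^n(\Lambda_B)\to\mathbb{P}^n(B/pB)$ induced by $\Lambda_B\to\Lambda_B/(pB+\Lambda_B^+)=B/pB$. *)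

(* Defs.v *)
From HB Require Import structures.
From mathcomp Require Import all_boot all_order all_algebra.
From mathcomp Require Import mpoly.
Set Implicit Arguments. Unset Strict Implicit. Unset Printing Implicit Defensive.
Import GRing.Theory.
Local Open Scope ring_scope.

(* The supercommutative ring  Lambda_B = B[xi_1,...,xi_m]  (Grassmann       *)
(* algebra over B on m odd generators).  An element is represented by its   *)
(* coefficients on the basis monomials xi_S = xi_{i1} ... xi_{ik}           *)
(* (i1 < ... < ik, S = {i1,...,ik}).                                        *)
Definition superring (B : comPzRingType) (m : nat) := {ffun {set 'I_m} -> B}.

Section Super.
Variables (B : comPzRingType) (m : nat).
Local Notation L := (superring B m).

(* sign of xi_S1 * xi_S2 = sgn * xi_(S1 u S2) for disjoint S1, S2:
   (-1)^(number of pairs i in S1, j in S2 with j < i) *)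
Definition super_sign (S1 S2 : {set 'I_m}) : B :=
  (-1) ^+ #|[set ij : 'I_m * 'I_m | (ij.1 \in S1) && (ij.2 \in S2) && (ij.2 < ij.1)%N]|.

Definition super_zero : L := [ffun _ => 0].
Definition super_one : L := [ffun S => if S == set0 then 1 else 0].
Definition super_add (a b : L) : L := [ffun S => a S + b S].
Definition super_mul (a b : L) : L :=
  [ffun S => \sum_(S1 : {set 'I_m}) \sum_(S2 : {set 'I_m} |
        (S1 :&: S2 == set0) && (S1 :|: S2 == S))
        super_sign S1 S2 * a S1 * b S2].
Definition super_sum (k : nat) (F : 'I_k -> L) : L :=
  [ffun S => \sum_(i < k) F i S].
Definition super_exp (a : L) (e : nat) : L := iter e (super_mul a) super_one.

Definition super_even (a : L) : Prop := forall S : {set 'I_m}, odd #|S| -> a S = 0.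

Definition even_unit (u : L) : Prop :=
  super_even u /\ exists v : L, super_even v /\ super_mul u v = super_one.

Definition unimodular (n : nat) (r : 'I_n.+1 -> L) : Prop :=
  (forall i, super_even (r i)) /\
  exists a : 'I_n.+1 -> L, super_sum (fun i => super_mul (a i) (r i)) = super_one.

(* body map Lambda_B -> Lambda_B/(pB + Lambda_B^+) = B/pB is:
   take the coefficient of xi_emptyset, then reduce mod p. *)
Definition body (a : L) : B := a set0.
End Super.

Definition finitely_generated_ring (B : comPzRingType) : Prop :=
  exists s : seq B, forall b : B, forall S : {pred B},
    subring_closed S -> {subset s <= S} -> b \in S.

Definition in_pB (p : nat) (B : comPzRingType) (x : B) : Prop :=
  exists y : B, x = p%:R * y.

Definition p_nilpotent (p : nat) (B : comPzRingType) : Prop :=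
  exists k : nat, (p%:R : B) ^+ k = 0.

Definition mod_p_reduced (p : nat) (B : comPzRingType) : Prop :=
  forall (x : B) (k : nat), in_pB p (x ^+ k.+1) -> in_pB p x.

(* Subvarieties W of P^n_{F_p}: W = V(f_1,...,f_k) with f_j homogeneous in  *)
(* F_p[X_0..X_n].  For x in B^{n+1} (representing a point of P^n(B/pB) via *)
(* reduction mod p), "x mod p lies in W" means f_j(x mod p) = 0 in B/pB,    *)
(* i.e. f_j evaluated at x (with F_p coefficients lifted to 0..p-1) lies in *)
(* pB -- independent of the lift.                                           *)
Definition evalFp (p : nat) (B : comPzRingType) (n : nat)
    (f : {mpoly 'F_p[n]}) (x : 'I_n -> B) : B :=
  \sum_(mo <- msupp f) ((nat_of_ord (f@_mo) : nat)%:R * \prod_(i < n) x i ^+ mo i).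

Definition homogeneous_system (p n : nat) (fs : seq {mpoly 'F_p[n]}) : Prop :=
  forall f, f \in fs -> exists d : nat, f \is d.-homog.

Definition body_in_W (p : nat) (B : comPzRingType) (n : nat)
    (fs : seq {mpoly 'F_p[n.+1]}) (x : 'I_n.+1 -> B) : Prop :=
  forall f, f \in fs -> in_pB p (evalFp f x).

(* the superspace P^n restricted to W, on representatives *)
Definition in_Wtilde (p : nat) (B : comPzRingType) (m n : nat)
    (fs : seq {mpoly 'F_p[n.+1]}) (r : 'I_n.+1 -> superring B m) : Prop :=
  unimodular r /\ body_in_W fs (fun i => body (r i)).

Definition Fr (p : nat) (B : comPzRingType) (m n : nat)
    (r : 'I_n.+1 -> superring B m) : 'I_n.+1 -> superring B m :=
  fun i => super_exp (r i) p.

(* Main.v *)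
Require Import Defs.
From HB Require Import structures.
From mathcomp Require Import all_boot all_order all_algebra.
From mathcomp Require Import mpoly.
From mathcomp Require Import zify.
From Stdlib Require Import FunctionalExtensionality.
Set Warnings "-redundant-canonical-projection".
Set Implicit Arguments. Unset Strict Implicit. Unset Printing Implicit Defensive.
Import GRing.Theory.
Local Open Scope ring_scope.

Section Signs.
Variable m : nat.
Local Notation T := {set 'I_m}.

Definition Nc (X Y : T) : nat :=
  \sum_(i : 'I_m) \sum_(j : 'I_m) ((i \in X) && (j \in Y) && (j < i)%N : nat).

Lemma card_Nc (X Y : T) :
  #|[set ij : 'I_m * 'I_m | (ij.1 \in X) && (ij.2 \in Y) && (ij.2 < ij.1)%N]| = Nc X Y.
Proof.
rewrite -sum1dep_card big_mkcond /Nc pair_bigA /=.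
by apply: eq_bigr => ij _; case: ifP.
Qed.

Lemma disjP (X Y : T) i : X :&: Y == set0 -> i \in X -> i \in Y -> False.
Proof. by move=> /eqP/setP/(_ i) H h1 h2; move: H; rewrite !inE h1 h2. Qed.

Lemma Nc_Ul (X Y Z : T) : X :&: Y == set0 -> Nc (X :|: Y) Z = (Nc X Z + Nc Y Z)%N.
Proof.
move=> d; rewrite /Nc -big_split; apply: eq_bigr => i _.
rewrite -big_split; apply: eq_bigr => j _ /=.
rewrite inE; case hX: (i \in X); case hY: (i \in Y) => //=.
by case: (disjP d hX hY).
by case: ((j \in Z) && (j < i)%N).
Qed.

Lemma Nc_Ur (X Y Z : T) : Y :&: Z == set0 -> Nc X (Y :|: Z) = (Nc X Y + Nc X Z)%N.
Proof.
move=> d; rewrite /Nc -big_split; apply: eq_bigr => i _.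
rewrite -big_split; apply: eq_bigr => j _ /=.
rewrite inE; case: (i \in X) => //=; case hX: (j \in Y); case hY: (j \in Z) => //=.
by case: (disjP d hX hY).
by case: (j < i)%N.
Qed.

Lemma card_sum (Y : T) : \sum_(j : 'I_m) ((j \in Y) : nat) = #|Y|.
Proof. by rewrite -sum1_card [RHS]big_mkcond. Qed.

Lemma Nc_sym (X Y : T) : X :&: Y == set0 -> (Nc X Y + Nc Y X)%N = (#|X| * #|Y|)%N.
Proof.
move=> d; rewrite /Nc [X in (_ + X)%N]exchange_big -big_split.
rewrite -card_sum big_distrl /=.
apply: eq_bigr => i _; rewrite -big_split /=.
rewrite -card_sum big_distrr /=; apply: eq_bigr => j _.
case hX: (i \in X); case hY: (j \in Y) => //=.
- have ne : i != j by apply/eqP => e; subst j; case: (disjP d hX hY).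
  case hjX: (j \in X); first by case: (disjP d hjX hY).
  case hiY: (i \in Y); first by case: (disjP d hX hiY).
  move: ne; rewrite -val_eqE /=; case: (ltngtP i j) => //= h _; rewrite ltnNge ltnW.
Qed.
End Signs.


Section Super.
Variables (B : comPzRingType) (m : nat).
Local Notation L := (superring B m).
Local Notation T := {set 'I_m}.

Lemma signE (X Y : T) : super_sign B X Y = (-1) ^+ Nc X Y.
Proof. by rewrite /super_sign card_Nc. Qed.

Definition cnd (S1 S2 S : T) := (S1 :&: S2 == set0) && (S1 :|: S2 == S).

Lemma mulE (a b : L) S : super_mul a b S =
  \sum_(S1 : T) \sum_(S2 : T)
     (if cnd S1 S2 S then super_sign B S1 S2 * a S1 * b S2 else 0).
Proof. by rewrite ffunE; apply: eq_bigr => S1 _; rewrite big_mkcond. Qed.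

Definition F3 (a b c : L) (S : T) : B :=
  \sum_(S1 : T) \sum_(S2 : T) \sum_(S3 : T)
    (if [&& S1 :&: S2 == set0, (S1 :|: S2) :&: S3 == set0 & S1 :|: S2 :|: S3 == S]
     then (-1) ^+ (Nc S1 S2 + Nc S1 S3 + Nc S2 S3)%N * a S1 * b S2 * c S3 else 0).

Lemma mulA_l (a b c : L) S : super_mul (super_mul a b) c S = F3 a b c S.
Proof.
rewrite mulE.
transitivity (\sum_(T0 : T) \sum_(S3 : T) \sum_(S1 : T) \sum_(S2 : T)
  (if cnd T0 S3 S then (if cnd S1 S2 T0 then
     super_sign B T0 S3 * super_sign B S1 S2 * a S1 * b S2 * c S3 else 0) else 0)).
  apply: eq_bigr => T0 _; apply: eq_bigr => S3 _.
  case: ifP => h; last by rewrite big1 // => S1 _; rewrite big1.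
  rewrite mulE mulr_sumr mulr_suml; apply: eq_bigr => S1 _.
  rewrite mulr_sumr mulr_suml; apply: eq_bigr => S2 _.
  by case: ifP; rewrite ?mulr0 ?mul0r // !mulrA.
under eq_bigr => T0 _ do rewrite exchange_big.
under eq_bigr => T0 _ do under eq_bigr => S1 _ do rewrite exchange_big.
rewrite exchange_big; apply: eq_bigr => S1 _.
rewrite exchange_big; apply: eq_bigr => S2 _.
rewrite exchange_big; apply: eq_bigr => S3 _.
rewrite (bigD1 (S1 :|: S2)) //= big1 ?addr0; last first.
  by move=> T0 /negbTE ne; rewrite /cnd [_ == T0]eq_sym ne andbF; case: ifP.
rewrite /cnd eqxx andbT.
case h12: (S1 :&: S2 == set0) => /=; last by case: ifP.
case h: (_ && _) => //; move/andP: h => [h3 _].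
rewrite !signE -!exprD Nc_Ul //.
have h13 : S1 :&: S3 == set0.
  by apply/eqP/setP => i; move/eqP/setP/(_ i): h3; rewrite !inE; case: (i \in S1).
have h23 : S2 :&: S3 == set0.
  by apply/eqP/setP => i; move/eqP/setP/(_ i): h3; rewrite !inE; case: (i \in S2); rewrite ?orbT.
by congr (_ * _ * _ * _); congr (_ ^+ _); rewrite addnC addnA.
Qed.

Lemma mulA_r (a b c : L) S : super_mul a (super_mul b c) S = F3 a b c S.
Proof.
rewrite mulE.
transitivity (\sum_(S1 : T) \sum_(U : T) \sum_(S2 : T) \sum_(S3 : T)
  (if cnd S1 U S then (if cnd S2 S3 U then
     super_sign B S1 U * super_sign B S2 S3 * a S1 * b S2 * c S3 else 0) else 0)).
  apply: eq_bigr => S1 _; apply: eq_bigr => U _.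
  case: ifP => h; last by rewrite big1 // => S2 _; rewrite big1.
  rewrite mulE mulr_sumr; apply: eq_bigr => S2 _.
  rewrite mulr_sumr; apply: eq_bigr => S3 _.
  by case: ifP; rewrite ?mulr0 ?mul0r // => _; rewrite !mulrA; congr (_ * _ * _); rewrite mulrAC.
apply: eq_bigr => S1 _.
rewrite exchange_big; apply: eq_bigr => S2 _.
rewrite exchange_big; apply: eq_bigr => S3 _.
rewrite (bigD1 (S2 :|: S3)) //= big1 ?addr0; last first.
  by move=> U /negbTE ne; rewrite /cnd [_ == U]eq_sym ne andbF; case: ifP.
rewrite /cnd eqxx andbT setUA setIUr setIUl !setU_eq0.
case h12: (S1 :&: S2 == set0); case h13: (S1 :&: S3 == set0);
  case h23: (S2 :&: S3 == set0) => //=; try by case: ifP.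
case: ifP => // _.
rewrite !signE -!exprD Nc_Ur // !mulrA; congr (_ * _ * _ * _); congr (_ ^+ _).
Qed.

Lemma super_mulA (a b c : L) : super_mul (super_mul a b) c = super_mul a (super_mul b c).
Proof. by apply/ffunP => S; rewrite mulA_l mulA_r. Qed.

Lemma sign0l (X : T) : super_sign B set0 X = 1.
Proof. by rewrite signE /Nc big1 // => i _; rewrite big1 // => j _; rewrite inE. Qed.
Lemma sign0r (X : T) : super_sign B X set0 = 1.
Proof. by rewrite signE /Nc big1 // => i _; rewrite big1 // => j _; rewrite inE andbF. Qed.

Lemma super_mul1r (a : L) : super_mul (super_one B m) a = a.
Proof.
apply/ffunP => S; rewrite mulE (bigD1 set0) //= [X in _ + X]big1 ?addr0; last first.
  by move=> S1 /negbTE ne; rewrite big1 // => S2 _; rewrite ffunE ne; case: ifP; rewrite ?mulr0 ?mul0r.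
rewrite (bigD1 S) //= big1 ?addr0; last first.
  by move=> S2 /negbTE ne; rewrite /cnd set0U ne andbF.
by rewrite /cnd set0I set0U !eqxx /= sign0l ffunE eqxx !mul1r.
Qed.

Lemma super_mulr1 (a : L) : super_mul a (super_one B m) = a.
Proof.
apply/ffunP => S; rewrite mulE (bigD1 S) //= [X in _ + X]big1 ?addr0; last first.
  move=> S1 ne; rewrite big1 // => S2 _; rewrite ffunE /cnd.
  case: (S2 =P set0) => [->|]; last by rewrite mulr0; case: ifP.
  by rewrite setU0 (negbTE ne) andbF.
rewrite (bigD1 set0) //= big1 ?addr0; last first.
  by move=> S2 /negbTE ne; rewrite ffunE ne mulr0; case: ifP.
by rewrite /cnd setI0 setU0 !eqxx /= sign0r ffunE eqxx mul1r mulr1.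
Qed.

Lemma super_mulDl (a b c : L) : super_mul (super_add a b) c = super_add (super_mul a c) (super_mul b c).
Proof.
apply/ffunP => S; rewrite [RHS]ffunE !mulE -big_split; apply: eq_bigr => S1 _.
rewrite -big_split; apply: eq_bigr => S2 _ /=.
by case: ifP; rewrite ?addr0 // ffunE mulrDr mulrDl.
Qed.

Lemma super_mulDr (a b c : L) : super_mul a (super_add b c) = super_add (super_mul a b) (super_mul a c).
Proof.
apply/ffunP => S; rewrite [RHS]ffunE !mulE -big_split; apply: eq_bigr => S1 _.
rewrite -big_split; apply: eq_bigr => S2 _ /=.
by case: ifP; rewrite ?addr0 // ffunE mulrDr.
Qed.
End Super.

Definition SR (B : comPzRingType) (m : nat) := superring B m.
HB.instance Definition _ (B : comPzRingType) (m : nat) := GRing.Zmodule.on (SR B m).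
Lemma addE (B : comPzRingType) (m : nat) (a b : SR B m) : super_add a b = a + b.
Proof. by []. Qed.

Lemma SR_mulDl (B : comPzRingType) (m : nat) :
  left_distributive (@super_mul B m : SR B m -> SR B m -> SR B m) +%R.
Proof. by move=> a b c; rewrite -!addE super_mulDl. Qed.
Lemma SR_mulDr (B : comPzRingType) (m : nat) :
  right_distributive (@super_mul B m : SR B m -> SR B m -> SR B m) +%R.
Proof. by move=> a b c; rewrite -!addE super_mulDr. Qed.

HB.instance Definition _ (B : comPzRingType) (m : nat) :=
  @GRing.Zmodule_isPzRing.Build (SR B m) (super_one B m) (@super_mul B m) (fun a b c => esym (@super_mulA B m a b c)) (@super_mul1r B m)
    (@super_mulr1 B m) (@SR_mulDl B m) (@SR_mulDr B m).



Section Ideal.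
Variable R : pzRingType.
Variable k : nat.

Definition inI (s : 'I_k -> R) (x : R) := exists c : 'I_k -> R, x = \sum_i c i * s i.
Definition central (s : 'I_k -> R) := forall i y, GRing.comm (s i) y.

Lemma commX_all (x : R) n : (forall y, GRing.comm x y) -> forall y, GRing.comm (x ^+ n) y.
Proof. by move=> h y; apply/commr_sym/commrX/commr_sym/h. Qed.

Lemma inI_add s x y : inI s x -> inI s y -> inI s (x + y).
Proof.
move=> [c ->] [d ->]; exists (fun i => c i + d i).
by rewrite -big_split; apply: eq_bigr => i _; rewrite mulrDl.
Qed.

Lemma inI_mull s x y : inI s x -> inI s (y * x).
Proof.
move=> [c ->]; exists (fun i => y * c i).
by rewrite mulr_sumr; apply: eq_bigr => i _; rewrite mulrA.
Qed.

Lemma inI_mulr s x y : central s -> inI s x -> inI s (x * y).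
Proof.
move=> cs [c ->]; exists (fun i => c i * y).
rewrite mulr_suml; apply: eq_bigr => i _; by rewrite -mulrA (cs i y) mulrA.
Qed.

Lemma inI_gen s j a : inI s (a * s j).
Proof.
exists (fun i => if i == j then a else 0).
rewrite (bigD1 j) //= eqxx big1 ?addr0 // => i /negbTE ->; by rewrite mul0r.
Qed.

Lemma inI_0 s : inI s 0.
Proof. by exists (fun => 0); rewrite big1 // => i _; rewrite mul0r. Qed.

Lemma inI_ext s s' x : (forall i, s i = s' i) -> inI s x -> inI s' x.
Proof. by move=> e [c ->]; exists c; apply: eq_bigr => i _; rewrite e. Qed.

Lemma inI_step s j e : central s -> inI s 1 ->
  inI (fun i => if i == j then s j ^+ e else s i) 1.
Proof.
move=> cs [c hc].
set s' := (fun i => if i == j then s j ^+ e else s i).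
have cs' : central s'.
  by move=> i y; rewrite /s'; case: (i == j); [apply: commX_all; apply: cs|apply: cs].
set y := \sum_(i | i != j) c i * s i.
have Hy : inI s' y.
  exists (fun i => if i == j then 0 else c i).
  rewrite (bigD1 j) //= eqxx mul0r add0r; apply: eq_bigr => i /negbTE ne.
  by rewrite /s' ne.
have H1 : 1 = y + c j * s j by rewrite hc (bigD1 j) //= addrC.
suff: forall e', exists2 z, inI s' z & 1 = z + c j ^+ e' * s j ^+ e'.
  case/(_ e) => z hz ->; apply: inI_add => //.
  have -> : s j ^+ e = s' j by rewrite /s' eqxx.
  exact: inI_gen.
elim=> [|e' [z hz he]]; first by exists 0; [exact: inI_0|rewrite add0r !expr0 mulr1].
exists (y * z + y * (c j ^+ e' * s j ^+ e') + c j * s j * z).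
  apply: inI_add; first apply: inI_add.
  - exact: inI_mull.
  - by apply: inI_mulr.
  - exact: inI_mull.
rewrite -[LHS]mul1r {1}H1 {1}he mulrDl !mulrDr -!addrA; congr (_ + _).
congr (_ + (_ + _)).
rewrite !exprS -!mulrA; congr (_ * _); rewrite !mulrA; congr (_ * _).
exact: cs.
Qed.

Lemma inI_pow s e : central s -> inI s 1 -> inI (fun i => s i ^+ e) 1.
Proof.
move=> cs h.
suff: forall t, inI (fun i : 'I_k => if (i < t)%N then s i ^+ e else s i) 1.
  move/(_ k); apply: inI_ext => i; by rewrite ltn_ord.
elim=> [|t IH]; first by apply: inI_ext h => i.
have [lt|ge] := ltnP t k; last first.
  apply: inI_ext IH => i; have := ltn_ord i => hi.
  by rewrite (leq_trans hi ge) (leq_trans hi (leqW ge)).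
set s1 := (fun i : 'I_k => if (i < t)%N then s i ^+ e else s i).
have cs1 : central s1.
  by move=> i y; rewrite /s1; case: (i < t)%N; [apply: commX_all; apply: cs|apply: cs].
have := inI_step (Ordinal lt) e cs1 IH; apply: inI_ext => i.
rewrite /s1 /=; case: eqP => [->|ne] /=; first by rewrite ltnn ltnSn.
have ne' : (i : nat) != t by apply/eqP => hh; apply: ne; apply: val_inj.
by rewrite [in RHS]ltnS [in RHS]leq_eqVlt (negbTE ne').
Qed.
End Ideal.


Section SRlemmas.
Variables (B : comPzRingType) (m : nat).
Local Notation R := (SR B m).
Local Notation T := {set 'I_m}.

Lemma SR_mulE (a b : R) : a * b = super_mul a b. Proof. by []. Qed.
Lemma SR_oneE : (1 : R) = super_one B m. Proof. by []. Qed.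

Lemma expE (a : R) e : super_exp a e = a ^+ e.
Proof. elim: e => [|e IH]; first by rewrite expr0. by rewrite exprS -IH. Qed.

Lemma sumE k (F : 'I_k -> R) : super_sum F = \sum_i F i.
Proof.
apply/ffunP => S; rewrite ffunE.
elim/big_rec2: _ => [|i y1 y2 _ ->]; by rewrite ffunE.
Qed.

Lemma even_one : super_even (super_one B m).
Proof.
move=> S oS; rewrite ffunE; case: eqP => // e; by rewrite e cards0 in oS.
Qed.

Lemma card_disjU (S1 S2 : T) : S1 :&: S2 == set0 -> #|S1 :|: S2| = (#|S1| + #|S2|)%N.
Proof. by move/eqP=> h; rewrite -cardsUI h cards0 addn0. Qed.

Lemma even_mul (a b : R) : super_even a -> super_even b -> super_even (a * b).
Proof.
move=> ea eb S oS; rewrite SR_mulE mulE big1 // => S1 _; rewrite big1 // => S2 _.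
case: ifP => // /andP [d /eqP u]; move: oS; rewrite -u card_disjU // oddD.
case o1: (odd #|S1|) => /= o2; first by rewrite ea ?mulr0 ?mul0r.
by rewrite (eb S2) ?mulr0.
Qed.

Lemma even_exp (a : R) e : super_even a -> super_even (a ^+ e).
Proof.
move=> ea; elim: e => [|e IH]; first by rewrite expr0; apply: even_one.
by rewrite exprS; apply: even_mul.
Qed.

Lemma sign_sym (X Y : T) : X :&: Y == set0 -> ~~ odd #|X| ->
  super_sign B X Y = super_sign B Y X.
Proof.
move=> d eX; rewrite !signE -signr_odd -[in RHS]signr_odd.
have := Nc_sym d; move/(congr1 odd); rewrite oddD oddM (negbTE eX) /=.
by case: (odd (Nc X Y)); case: (odd (Nc Y X)).
Qed.

Lemma even_central (a : R) : super_even a -> forall y : R, GRing.comm a y.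
Proof.
move=> ea y; apply/ffunP => S; rewrite /GRing.comm !SR_mulE !mulE.
rewrite [RHS]exchange_big; apply: eq_bigr => X _; apply: eq_bigr => Y _.
have -> : cnd Y X S = cnd X Y S by rewrite /cnd setIC setUC.
case: ifP => // /andP [d _].
case oX: (odd #|X|); first by rewrite (ea X) ?oX // ?mulr0 ?mul0r ?mulr0.
rewrite (sign_sym d) ?oX //.
rewrite mulrAC [RHS]mulrAC -!mulrA; congr (_ * _).
by rewrite mulrC.
Qed.

Lemma body_mul (a b : R) : body (a * b) = body a * body b.
Proof.
rewrite /body SR_mulE mulE (bigD1 set0) //= [X in _ + X]big1 ?addr0; last first.
  move=> S1 /negbTE ne; rewrite big1 // => S2 _.
  by rewrite /cnd setU_eq0 ne andbF /=.
rewrite (bigD1 set0) //= [X in _ + X]big1 ?addr0; last first.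
  by move=> S2 /negbTE ne; rewrite /cnd set0U ne andbF.
by rewrite /cnd set0I set0U eqxx /= sign0l mul1r.
Qed.

Lemma body_exp (a : R) e : body (a ^+ e) = body a ^+ e.
Proof.
elim: e => [|e IH]; first by rewrite !expr0 /body SR_oneE ffunE eqxx.
by rewrite !exprS body_mul IH.
Qed.
End SRlemmas.


Section Frob.
Variables (p : nat) (B : comPzRingType).
Hypothesis pr : prime p.

Local Notation inp := (in_pB p (B := B)).
Definition cong (x y : B) := inp (x - y).

Lemma inp0 : inp 0. Proof. by exists 0; rewrite mulr0. Qed.
Lemma inp_add x y : inp x -> inp y -> inp (x + y).
Proof. by move=> [a ->] [b ->]; exists (a + b); rewrite mulrDr. Qed.
Lemma inp_opp x : inp x -> inp (- x).
Proof. by move=> [a ->]; exists (- a); rewrite mulrN. Qed.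
Lemma inp_mull x y : inp x -> inp (y * x).
Proof. by move=> [a ->]; exists (y * a); rewrite mulrCA. Qed.
Lemma inp_sum I (r : seq I) (F : I -> B) : (forall i, inp (F i)) -> inp (\sum_(i <- r) F i).
Proof. by move=> h; elim/big_ind: _ => //; [exact: inp0|exact: inp_add]. Qed.

Lemma cong_refl x : cong x x. Proof. by rewrite /cong subrr; exact: inp0. Qed.
Lemma cong_sym x y : cong x y -> cong y x.
Proof. by rewrite /cong => /inp_opp; rewrite opprB. Qed.
Lemma cong_trans x y z : cong x y -> cong y z -> cong x z.
Proof. by move=> h1 h2; have := inp_add h1 h2; rewrite /cong addrA subrK. Qed.
Lemma cong_add x y x' y' : cong x x' -> cong y y' -> cong (x + y) (x' + y').
Proof. by move=> h1 h2; have := inp_add h1 h2; rewrite /cong opprD addrACA. Qed.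
Lemma cong_mul x y x' y' : cong x x' -> cong y y' -> cong (x * y) (x' * y').
Proof.
move=> h1 h2; have := inp_add (inp_mull x h2) (inp_mull y' h1).
move=> h; rewrite /cong; suff -> : x * y - x' * y' = x * (y - y') + y' * (x - x') by [].
by rewrite !mulrBr [y' * x]mulrC [y' * x']mulrC addrA subrK.
Qed.
Lemma cong_inp x y : cong x y -> inp y -> inp x.
Proof. by move=> h1 h2; have := inp_add h1 h2; rewrite subrK. Qed.

Lemma p_gt0 : (0 < p)%N. Proof. exact: prime_gt0. Qed.

Lemma inp_exp x : inp x -> inp (x ^+ p).
Proof.
move=> h; have -> : x ^+ p = x ^+ p.-1 * x by rewrite -exprSr prednK // p_gt0.
exact: inp_mull.
Qed.

Lemma frob_add x y : cong ((x + y) ^+ p) (x ^+ p + y ^+ p).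
Proof.
have p1 := prime_gt1 pr.
have hp := prednK p_gt0; set q := p.-1 in hp *.
rewrite /cong -{2 3 4}hp.
rewrite exprDn big_ord_recl big_ord_recr /=.
rewrite subn0 expr0 mulr1 bin0 mulr1n.
have -> : bump 0 q = q.+1 by rewrite /bump leq0n.
rewrite subnn expr0 mul1r binn mulr1n addrCA addrK.
apply: inp_sum => i.
have -> : bump 0 i = i.+1 by rewrite /bump leq0n.
have : (p %| 'C(q.+1, i.+1))%N.
  have e : 'C(q.+1, i.+1) = 'C(p, i.+1) by rewrite /q prednK // p_gt0.
  rewrite e; apply: prime_dvd_bin => //; have := ltn_ord i; rewrite /q; lia.
case/dvdnP => c ->; exists (x ^+ (q.+1 - i.+1) * y ^+ i.+1 *+ c).
by rewrite mulrnA mulr_natl.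
Qed.


Lemma cong_sum I (r : seq I) (F G : I -> B) : (forall i, cong (F i) (G i)) ->
  cong (\sum_(i <- r) F i) (\sum_(i <- r) G i).
Proof.
move=> h; elim: r => [|a r IH]; first by rewrite !big_nil; apply: cong_refl.
by rewrite !big_cons; apply: cong_add.
Qed.

Lemma frob_sum I (r : seq I) (F : I -> B) :
  cong ((\sum_(i <- r) F i) ^+ p) (\sum_(i <- r) F i ^+ p).
Proof.
elim: r => [|a r IH].
  by rewrite !big_nil expr0n (gtn_eqF (prime_gt0 pr)) /=; apply: cong_refl.
rewrite !big_cons; apply: cong_trans (frob_add _ _) _.
by apply: cong_add => //; apply: cong_refl.
Qed.

Lemma fermatB (c : nat) : cong ((c%:R : B) ^+ p) c%:R.
Proof.
have le : (c <= c ^ p)%N.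
  by case: c => // c'; rewrite -{1}(expn1 c'.+1) leq_pexp2l // p_gt0.
rewrite -natrX /cong -natrB //.
have : (p %| c ^ p - c)%N by rewrite -eqn_mod_dvd // fermat_little.
by case/dvdnP => k ->; exists k%:R; rewrite natrM mulrC.
Qed.

Lemma evalFp_frob n (f : {mpoly 'F_p[n]}) (x : 'I_n -> B) :
  inp (evalFp f x) -> inp (evalFp f (fun i => x i ^+ p)).
Proof.
move=> h; apply: (@cong_inp _ (evalFp f x ^+ p)); last exact: inp_exp.
rewrite /evalFp; apply: cong_trans (cong_sym (frob_sum _ _)).
apply: cong_sum => mo; rewrite exprMn; apply: cong_mul; first exact: cong_sym (fermatB _).
rewrite -prodrXl; under eq_bigr => i _ do rewrite exprAC.
exact: cong_refl.
Qed.
End Frob.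


Unset Implicit Arguments.
Set Strict Implicit.

Theorem mainTheorem16 (p : nat) (p_prime : prime p) (p_odd : odd p)
    (n : nat) (fs : seq {mpoly 'F_p[n.+1]}) (fs_homog : homogeneous_system fs)
    (B : comPzRingType)
    (B_fg : finitely_generated_ring B) (B_pnil : p_nilpotent p B)
    (B_red : mod_p_reduced p B) (m : nat) :
  (* Fr is a well-defined endomorphism of P^n(Lambda_B) ... *)
  (forall r : 'I_n.+1 -> superring B m, unimodular r -> unimodular (Fr p r)) /\
  (forall (r : 'I_n.+1 -> superring B m) (u : superring B m), even_unit u ->
     exists v : superring B m, even_unit v /\
       Fr p (fun i => super_mul u (r i)) = (fun i => super_mul v (Fr p r i))) /\
  (* ... which restricts to an endomorphism of Wtilde = P^n|_W *)
  (forall r : 'I_n.+1 -> superring B m,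
     in_Wtilde fs r -> in_Wtilde fs (Fr p r)).
Proof.
have P1 : forall r : 'I_n.+1 -> superring B m, unimodular r -> unimodular (Fr p r).
  move=> r [ev [a ha]]; split.
    by move=> i; rewrite /Fr (expE (r i : SR B m)); apply: even_exp.
  have cs : central (r : 'I_n.+1 -> SR B m) := fun i => even_central (ev i).
  have h1 : inI (r : 'I_n.+1 -> SR B m) 1.
    by exists a; rewrite SR_oneE -ha sumE.
  have [c hc] := inI_pow p cs h1.
  exists c; rewrite sumE -SR_oneE hc; apply: eq_bigr => i _.
  by rewrite /Fr expE.
split; first exact: P1.
split.
  move=> r u [eu [v [ev huv]]]; exists ((u : SR B m) ^+ p); split.
    split; first exact: even_exp.
    exists ((v : SR B m) ^+ p); split; first exact: even_exp.
    rewrite -SR_mulE -exprMn_comm; last exact: even_central.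
    by rewrite SR_mulE huv -SR_oneE expr1n.
  apply: functional_extensionality => i.
  rewrite /Fr !expE -!SR_mulE exprMn_comm //; exact: even_central.
move=> r [ur hb]; split; first exact: P1.
move=> f hf.
have -> : (fun i => body (Fr p r i)) = (fun i => body (r i) ^+ p).
  by apply: functional_extensionality => i; rewrite /Fr (expE (r i : SR B m)) body_exp.
exact: evalFp_frob (hb f hf).
Qed.
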